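(* Let $\mathbf{T}\in\{0,1\}^{n\times\ell}$ be a matrix all of whose columns are dirty, with $\delta(\mathbf{T})\le 3$. If $\mathcal{T}_3\ne\emptyset$, then $\ell\le|\mathcal{T}_2|+|\mathcal{T}_3|+2$.
   Context: A column of a binary matrix is dirty if it contains both $0$ and $1$. For rows $u,w\in\{0,1\}^\ell$, $D(u,w)=\{j\in[\ell]:u[j]\ne w[j]\}$ and $d(u,w)=|D(u,w)|$; $\delta(\mathbf{T})=\max_{i\ne i'}d(\mathbf{T}[i],\mathbf{T}[i'])$ where $\mathbf{T}[i]$ is the $i$-th row. For $x\in\mathbb{N}$, $\mathcal{T}_x$ is the set system (without duplicates) $\{D(\mathbf{T}[i],\mathbf{T}[n]): i\in[n-1],\ d(\mathbf{T}[i],\mathbf{T}[n])=x\}$. *)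

(* Defs.v *)
From mathcomp Require Import all_boot all_order all_algebra.
Set Implicit Arguments. Unset Strict Implicit. Unset Printing Implicit Defensive.

Definition dirty_col (m l : nat) (T : 'M[bool]_(m, l)) (j : 'I_l) : bool :=
  [exists i, T i j] && [exists i, ~~ T i j].

Definition Dset (m l : nat) (T : 'M[bool]_(m, l)) (i i' : 'I_m) : {set 'I_l} :=
  [set j | T i j != T i' j].

Definition dist (m l : nat) (T : 'M[bool]_(m, l)) (i i' : 'I_m) : nat :=
  #|Dset T i i'|.

(* delta(T) = max over distinct pairs of rows of d (0 if fewer than 2 rows) *)
Definition delta (m l : nat) (T : 'M[bool]_(m, l)) : nat :=
  \max_(p : 'I_m * 'I_m | p.1 != p.2) dist T p.1 p.2.

(* T_x for a matrix with n.+1 rows, the last row (ord_max) playing the role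
   of T[n]: the set (no duplicates) of D(T[i], T[last]) for i a row other
   than the last with d(T[i], T[last]) = x. *)
Definition Tsys (n l : nat) (T : 'M[bool]_(n.+1, l)) (x : nat) : {set {set 'I_l}} :=
  [set Dset T i ord_max | i in [pred i : 'I_n.+1 | (i != ord_max) && (dist T i ord_max == x)]].

(* Main.v *)
Require Import Defs.
From mathcomp Require Import all_boot all_order all_algebra.
From mathcomp Require Import zify.

Section H.
Variables (n l : nat) (T : 'M[bool]_(n.+1, l)).

Lemma dist_le (i i' : 'I_n.+1) : i != i' -> dist T i i' <= delta T.
Proof. move=> h; exact: (@leq_bigmax_cond _ (fun p : 'I_n.+1 * 'I_n.+1 => p.1 != p.2) (fun p => dist T p.1 p.2) (i, i')). Qed.

Lemma symdiff_le (i i' : 'I_n.+1) :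
  #|Dset T i ord_max :\: Dset T i' ord_max| + #|Dset T i' ord_max :\: Dset T i ord_max|
  <= dist T i i'.
Proof.
set X := Dset T i ord_max :\: Dset T i' ord_max.
set Y := Dset T i' ord_max :\: Dset T i ord_max.
have -> : #|X| + #|Y| = #|X :|: Y|.
  rewrite cardsU; suff -> : X :&: Y = set0 by rewrite cards0 subn0.
  apply/setP => j; rewrite !inE.
  by case: (T i j); case: (T i' j); case: (T ord_max j).
apply: subset_leq_card; apply/subsetP => j; rewrite !inE.
by case: (T i j); case: (T i' j); case: (T ord_max j).
Qed.

Lemma key (i0 i : 'I_n.+1) : delta T <= 3 -> i0 != ord_max -> i != ord_max ->
  dist T i0 ord_max = 3 ->
  (#|Dset T i ord_max :\: Dset T i0 ord_max| * 2 <= dist T i ord_max) /\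
  dist T i ord_max <= 3.
Proof.
move=> hd h0 hi h3; split; last first.
  exact: leq_trans (dist_le _ _ hi) hd.
case: (eqVneq i i0) => [->|ne]; first by rewrite setDv cards0.
have := symdiff_le i i0; have := dist_le _ _ ne.
have := cardsD (Dset T i ord_max) (Dset T i0 ord_max).
have := cardsD (Dset T i0 ord_max) (Dset T i ord_max).
rewrite setIC /dist in h3 *.
have := subset_leq_card (subsetIl (Dset T i ord_max) (Dset T i0 ord_max)).
have := subset_leq_card (subsetIr (Dset T i ord_max) (Dset T i0 ord_max)).
lia.
Qed.
End H.

Theorem lemma14 (n l : nat) (T : 'M[bool]_(n.+1, l)) :
  (forall j : 'I_l, dirty_col T j) ->
  delta T <= 3 ->
  Tsys T 3 != set0 ->
  l <= #|Tsys T 2| + #|Tsys T 3| + 2.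
Proof.
move=> hdirty hd /set0Pn [A0 hA0].
have [i0 hi0 _] := imsetP hA0.
move: hi0; rewrite inE => /andP [h0 /eqP h3].
set A := Dset T i0 ord_max.
have cA : #|A| = 3 by [].
have cov : forall j : 'I_l, exists2 i : 'I_n.+1, i != ord_max & j \in Dset T i ord_max.
  move=> j; have /andP [/existsP [a ha] /existsP [b hb]] := hdirty j.
  case e: (T ord_max j).
    exists b; last by rewrite inE e; case: (T b j) hb.
    by apply/eqP => eb; rewrite eb e in hb.
  exists a; last by rewrite inE e ha.
  by apply/eqP => ea; rewrite ea e in ha.
set G := (Tsys T 2 :|: Tsys T 3) :\ A.
have memG : forall x, x \in ~: A -> exists2 B, B \in G & x \in B :\: A.
  move=> x; rewrite inE => xA.
  have [i hi xi] := cov x.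
  have [k1 k2] := @key _ _ T i0 i hd h0 hi h3.
  have k0 : 0 < #|Dset T i ord_max :\: A|.
    by apply/card_gt0P; exists x; rewrite inE xi xA.
  exists (Dset T i ord_max); last by rewrite inE xi xA.
  rewrite !inE; apply/andP; split.
    by apply/eqP => e; move: xA; rewrite -e xi.
  have : (dist T i ord_max == 2) || (dist T i ord_max == 3).
    rewrite /A in k0; lia.
  case/orP => hh; apply/orP; [left|right]; apply/imsetP; exists i => //;
    by rewrite inE hi hh.
pose g x := odflt set0 [pick B in G | x \in B :\: A].
have gP : forall x, x \in ~: A -> g x \in G /\ x \in g x :\: A.
  move=> x /memG [B hB hx]; rewrite /g.
  case: pickP => [B' /andP [h1 h2]|/(_ B)]; first by [].
  by rewrite hB hx.
have gsmall : forall B, B \in G -> #|B :\: A| <= 1.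
  move=> B; rewrite !inE => /andP [_ hB].
  have [i hi ->] : exists2 i : 'I_n.+1, i != ord_max & B = Dset T i ord_max.
    by case/orP: hB => /imsetP [i]; rewrite inE => /andP [hi _] ->; exists i.
  have [k1 k2] := @key _ _ T i0 i hd h0 hi h3; rewrite /A; lia.
have inj : {in ~: A &, injective g}.
  move=> x y hx hy e.
  have [g1 g2] := gP x hx; have [_ g3] := gP y hy.
  rewrite e in g1 g2.
  exact: (card_le1_eqP (gsmall _ g1)).
have : #|~: A| <= #|G|.
  rewrite -(card_in_imset inj); apply: subset_leq_card.
  by apply/subsetP => B /imsetP [x hx ->]; case: (gP x hx).
have AT : A \in Tsys T 3 by apply/imsetP; exists i0; rewrite // inE h0 h3.
have c : #|Tsys T 2 :|: Tsys T 3| = #|G|.+1.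
  by rewrite (cardsD1 A) inE AT orbT.
have := cardsU (Tsys T 2) (Tsys T 3).
have := cardsC A; rewrite card_ord cA.
lia.
Qed.
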